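(* Let $K>1$ and define the asymmetric softmax $\tilde{\bm{\psi}}:\mathbb{R}^{K+1}\to\mathbb{R}^{K+1}$ by $$\tilde{\psi}_y(\bm{u})=\frac{\exp(u_y)}{\sum_{y'=1}^{K}\exp(u_{y'})}\ \ (1\le y\le K),\qquad \tilde{\psi}_{K+1}(\bm{u})=\frac{\exp(u_{K+1})}{\sum_{y'=1}^{K+1}\exp(u_{y'})-\max_{y'\in\{1,\dots,K\}}\exp(u_{y'})}.$$ Then for every $\bm{u}\in\mathbb{R}^{K+1}$: (i) $\tilde{\bm{\psi}}(\bm{u})\in\Delta^K\times[0,1]$; (ii) $\mathop{\rm argmax}_{y\in\{1,\dots,K+1\}}\tilde{\psi}_y(\bm{u})=\mathop{\rm argmax}_{y\in\{1,\dots,K+1\}}u_y$.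
   Context: $\Delta^K$ denotes the probability simplex $\{\bm{p}\in\mathbb{R}^K:p_y\ge0,\ \sum_y p_y=1\}$; $\Delta^K\times[0,1]$ means the first $K$ coordinates lie in $\Delta^K$ and the last in $[0,1]$. *)

(* Defs.v *)
From HB Require Import structures.
From mathcomp Require Import all_boot all_order all_algebra.
From mathcomp Require Import all_classical all_reals all_analysis.
Set Implicit Arguments. Unset Strict Implicit. Unset Printing Implicit Defensive.
Import Order.TTheory GRing.Theory Num.Theory.
Local Open Scope ring_scope.

(* Coordinates 1..K+1 of the paper are the ordinals 0..K of 'I_K.+1;
   paper's class K+1 is ord_max (value K). *)

(* max_{y' in {1..K}} exp(u_{y'}); exps are positive, so 0 is a neutral
   starting value and this is the genuine maximum (K >= 1 terms). *)
Definition maxexpK (R : realType) (K : nat) (u : 'I_K.+1 -> R) : R :=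
  \big[Num.max/0]_(i < K.+1 | (i < K)%N) expR (u i).

Definition asym_softmax (R : realType) (K : nat) (u : 'I_K.+1 -> R)
  (y : 'I_K.+1) : R :=
  if (y < K)%N then
    expR (u y) / (\sum_(i < K.+1 | (i < K)%N) expR (u i))
  else
    expR (u y) / ((\sum_(i < K.+1) expR (u i)) - maxexpK u).

Definition argmax_set (R : realType) (n : nat) (f : 'I_n -> R) : set 'I_n :=
  [set y | forall z, f z <= f y].

Definition in_simplex_x_unit (R : realType) (K : nat) (p : 'I_K.+1 -> R) : Prop :=
  (forall y : 'I_K.+1, (y < K)%N -> 0 <= p y) /\
  (\sum_(y < K.+1 | (y < K)%N) p y = 1) /\
  (0 <= p ord_max /\ p ord_max <= 1).

(* Main.v *)
Require Import Defs.
From HB Require Import structures.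
From mathcomp Require Import all_boot all_order all_algebra.
From mathcomp Require Import all_classical all_reals all_analysis.
From mathcomp Require Import ring lra.
Import Order.TTheory GRing.Theory Num.Theory.
Local Open Scope ring_scope.

Lemma bigmax0_ge (R : realType) (I : eqType) (r : seq I) (P : pred I)
  (F : I -> R) j : j \in r -> P j ->
  F j <= \big[Num.max/0]_(i <- r | P i) F i.
Proof.
elim: r => [//|a r IH]; rewrite in_cons big_cons => /orP[/eqP-> Pj|jr Pj].
  by rewrite Pj le_max lexx.
case: (P a); last exact: IH.
by rewrite le_max (IH jr Pj) orbT.
Qed.

Lemma bigmax0_att (R : realType) (I : Type) (r : seq I) (P : pred I)
  (F : I -> R) :
  let M := \big[Num.max/0]_(i <- r | P i) F i in
  M = 0 \/ exists i, P i /\ M = F i.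
Proof.
apply: (big_ind (fun x => x = 0 \/ exists i, P i /\ x = F i)).
- by left.
- move=> x y Hx Hy; case: (leP x y) => _; [exact: Hy|exact: Hx].
- by move=> i Pi; right; exists i.
Qed.

Theorem proposition1 (R : realType) (K : nat) (hK : (1 < K)%N)
  (u : 'I_K.+1 -> R) :
  in_simplex_x_unit (asym_softmax u) /\
  argmax_set (asym_softmax u) = argmax_set u.
Proof.
set e := fun i => expR (u i).
have eP i : 0 < e i by exact: expR_gt0.
set S := \sum_(i < K.+1 | (i < K)%N) e i.
set M := maxexpK u.
have hMge (i : 'I_K.+1) : (i < K)%N -> e i <= M.
  by move=> Hi; apply: bigmax0_ge => //; exact: mem_index_enum.
have K0 : (0 < K)%N by apply: ltn_trans hK.
pose i0 : 'I_K.+1 := inord 0.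
pose i1 : 'I_K.+1 := inord 1.
have i0K : (i0 < K)%N by rewrite /i0 inordK.
have i1K : (i1 < K)%N by rewrite /i1 inordK // ltnS ltnW.
have hMatt : exists j : 'I_K.+1, (j < K)%N /\ M = e j.
  case: (@bigmax0_att R _ (index_enum 'I_K.+1) (fun i => (i < K)%N) e) => [H0|H1]; last exact: H1.
  have H0' : M = 0 by exact: H0.
  have := hMge _ i0K; rewrite H0' => H; have := eP i0; lra.
have hSM : M < S.
  case: hMatt => j [jK ->].
  pose j' := if j == i0 then i1 else i0.
  have j'K : (j' < K)%N by rewrite /j'; case: ifP.
  have jj' : j' != j.
    rewrite /j'; case: ifP => [/eqP->|/negbT]; last by rewrite eq_sym.
    by apply/eqP => /(congr1 val); rewrite /= !inordK // ltnS ltnW.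
  rewrite /S (bigD1 j) //= (bigD1 j') /=; last by rewrite j'K.
  have := eP j'; have : 0 <= \sum_(i < K.+1 | ((i < K)%N && (i != j)) && (i != j')) e i.
    by apply: sumr_ge0 => i _; exact: ltW.
  lra.
have hM0 : 0 < M by have := hMge _ i0K; have := eP i0; lra.
have hS0 : 0 < S by lra.
have notK (i : 'I_K.+1) : ~~ (i < K)%N -> i = ord_max.
  by move=> H; apply: val_inj => /=; have := ltn_ord i; rewrite ltnS leq_eqVlt (negbTE H) orbF => /eqP.
have hT : \sum_(i < K.+1) e i = S + e ord_max.
  rewrite (bigID (fun i : 'I_K.+1 => (i < K)%N)) /= -/S; congr (_ + _).
  rewrite (big_pred1 ord_max) // => i /=; apply/idP/eqP; first exact: notK.
  by move=> ->; rewrite /= ltnn.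
set eK := e ord_max.
have hD : 0 < S + eK - M by have := eP ord_max; rewrite -/eK; lra.
have psiE (y : 'I_K.+1) : asym_softmax u y =
    if (y < K)%N then e y / S else e y / (S + eK - M).
  by rewrite /asym_softmax hT.
have psiK : asym_softmax u ord_max = eK / (S + eK - M).
  by rewrite psiE /= ltnn.
have key1 : (eK / (S + eK - M) <= M / S) = (eK <= M).
  rewrite ler_pdivrMr // mulrAC ler_pdivlMr //.
  apply/idP/idP => H.
    have : 0 <= (M - eK) * (S - M) by nra.
    by rewrite pmulr_lge0 ?subr_gt0 // subr_ge0.
  have : 0 <= (M - eK) * (S - M) by apply: mulr_ge0; lra.
  nra.
have key2 : (M / S <= eK / (S + eK - M)) = (M <= eK).
  rewrite ler_pdivlMr // mulrAC ler_pdivrMr //.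
  apply/idP/idP => H.
    have : 0 <= (eK - M) * (S - M) by nra.
    by rewrite pmulr_lge0 ?subr_gt0 // subr_ge0.
  have : 0 <= (eK - M) * (S - M) by apply: mulr_ge0; lra.
  nra.
have Lmax c : (forall z : 'I_K.+1, (z < K)%N -> e z <= c) <-> M <= c.
  split; first by case: hMatt => j [jK ->]; apply.
  by move=> H z zK; apply: le_trans (hMge _ zK) H.
have eLe a b : (e a <= e b) = (u a <= u b) by rewrite /e ler_expR.
split.
  split; [|split].
  - by move=> y yK; rewrite psiE yK; apply: divr_ge0; apply: ltW.
  - rewrite (eq_bigr (fun y => e y / S)); last by move=> y yK; rewrite psiE yK.
    by rewrite -mulr_suml divff // gt_eqF.
  - rewrite psiK; split.
      by apply: divr_ge0; apply: ltW => //; exact: eP.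
    by rewrite ler_pdivrMr // mul1r; lra.
have psi_lt (y z : 'I_K.+1) : (y < K)%N -> (z < K)%N ->
    (asym_softmax u z <= asym_softmax u y) = (e z <= e y).
  by move=> yK zK; rewrite !psiE yK zK ler_pM2r // invr_gt0.
apply/seteqP; split => y /= Hy.
- case: (boolP (y < K)%N) => yK.
  + have HM : M <= e y by apply/Lmax => z zK; rewrite -psi_lt // Hy.
    have HeyM : e y = M by apply/le_anti; rewrite HM hMge.
    have : asym_softmax u ord_max <= asym_softmax u y by apply: Hy.
    rewrite psiK psiE yK HeyM key1 => HK.
    move=> z; rewrite -eLe; case: (boolP (z < K)%N) => zK.
      by rewrite HeyM hMge.
    by rewrite (notK _ zK) HeyM.
  + rewrite (notK _ yK) in Hy *.
    have HM : M <= eK.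
      rewrite -key2; case: hMatt => j [jK Mj].
      by have := Hy j; rewrite psiE jK psiK -Mj.
    move=> z; rewrite -eLe; case: (boolP (z < K)%N) => zK.
      by apply: le_trans (hMge _ zK) HM.
    by rewrite (notK _ zK).
- have He z : e z <= e y by rewrite eLe.
  case: (boolP (y < K)%N) => yK.
  + have HM : M <= e y by apply/Lmax => z _.
    have HeyM : e y = M by apply/le_anti; rewrite HM hMge.
    have HK : eK <= M by rewrite -HeyM; exact: He.
    move=> z; case: (boolP (z < K)%N) => zK; first by rewrite psi_lt.
    by rewrite (notK _ zK) psiK psiE yK HeyM key1.
  + have yE := notK _ yK; rewrite yE in He *.
    have HM : M <= eK by apply/Lmax => z _.
    move=> z; case: (boolP (z < K)%N) => zK; last by rewrite (notK _ zK).
    have H2 : M / S <= eK / (S + eK - M) by rewrite key2.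
    rewrite psiK psiE zK.
    have H3 : e z / S <= M / S by rewrite ler_pM2r ?invr_gt0 // hMge.
    exact: (le_trans H3 H2).
Qed.
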